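(* Let $\bm{r}_i=(r_{1i},\ldots,r_{ni})^{T}\in\mathbb{R}^{n}$ and $w_i\in\mathbb{R}$ for $i=1,\ldots,m$. For each $j=1,\ldots,n$ let $$p_j=\max(r_{j1}+w_1,\ldots,r_{jm}+w_m),\qquad q_j=\min(r_{j1}-w_1,\ldots,r_{jm}-w_m).$$ Then $$\min_{\bm{x}\in\mathbb{R}^{n}}\max_{1\le i\le m}\big(\rho(\bm{r}_i,\bm{x})+w_i\big)=\Delta:=\tfrac12\max(p_1-q_1,\ldots,p_n-q_n),$$ where $\rho(\bm{x},\bm{y})=\max_{1\le j\le n}|x_j-y_j|$ is the Chebyshev distance, and the minimum is attained at every vector $\bm{x}=(x_j)$ with $p_j-\Delta\le x_j\le q_j+\Delta$ for all $j=1,\ldots,n$. *)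

(* Defs.v *)
From mathcomp Require Import all_boot all_order all_algebra.
Set Implicit Arguments. Unset Strict Implicit. Unset Printing Implicit Defensive.
Import Order.TTheory GRing.Theory Num.Theory.
Local Open Scope ring_scope.

(* Maximum / minimum of a finite nonempty family indexed by 'I_k.
   For k = 0 the value is an irrelevant default (0); all uses below
   are under the hypothesis that the index type is nonempty. *)
Definition fmax (R : realDomainType) (k : nat) (F : 'I_k -> R) : R :=
  let s := [seq F i | i <- enum 'I_k] in foldr Num.max (head 0 s) (behead s).

Definition fmin (R : realDomainType) (k : nat) (F : 'I_k -> R) : R :=
  let s := [seq F i | i <- enum 'I_k] in foldr Num.min (head 0 s) (behead s).

Definition cheb (R : realDomainType) (n : nat) (a b : 'cV[R]_n) : R :=
  fmax (fun j : 'I_n => `|a j 0 - b j 0|).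

(* Main.v *)
Require Import Defs.
From mathcomp Require Import all_boot all_order all_algebra.
From mathcomp Require Import lra.
Import Order.TTheory GRing.Theory Num.Theory.
Local Open Scope ring_scope.

Section Aux.
Variable R : realDomainType.

Lemma foldmax_ge (a : R) t x : x \in a :: t -> x <= foldr Num.max a t.
Proof.
elim: t a x => [|b t IH] a x /=; first by rewrite inE => /eqP ->.
rewrite !inE le_max => /or3P [/eqP ->|/eqP ->|xt].
- by rewrite orbC IH // mem_head.
- by rewrite lexx.
- by rewrite orbC IH // inE xt orbT.
Qed.

Lemma foldmax_in (a : R) t : foldr Num.max a t \in a :: t.
Proof.
elim: t => [|b t IH] /=; first by rewrite mem_head.
rewrite maxEle; case: ifP => _.
- move: IH; rewrite !inE => /orP [->|->] //; by rewrite !orbT.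
- by rewrite !inE eqxx orbT.
Qed.

Lemma foldmin_le (a : R) t x : x \in a :: t -> foldr Num.min a t <= x.
Proof.
elim: t a x => [|b t IH] a x /=; first by rewrite inE => /eqP ->.
rewrite !inE ge_min => /or3P [/eqP ->|/eqP ->|xt].
- by rewrite orbC IH // mem_head.
- by rewrite lexx.
- by rewrite orbC IH // inE xt orbT.
Qed.

Lemma foldmin_in (a : R) t : foldr Num.min a t \in a :: t.
Proof.
elim: t => [|b t IH] /=; first by rewrite mem_head.
rewrite minEle; case: ifP => _.
- by rewrite !inE eqxx orbT.
- move: IH; rewrite !inE => /orP [->|->] //; by rewrite !orbT.
Qed.

Lemma fmax_ge k (F : 'I_k -> R) i : F i <= fmax F.
Proof.
rewrite /fmax.
have : F i \in [seq F i | i <- enum 'I_k] by apply: map_f; rewrite mem_enum.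
case: [seq F i | i <- enum 'I_k] => [|a t] //= H.
exact: foldmax_ge.
Qed.

Lemma fmax_ex k (F : 'I_k -> R) : (0 < k)%N -> exists i, fmax F = F i.
Proof.
move=> hk; rewrite /fmax.
have : [seq F i | i <- enum 'I_k] != [::].
  by rewrite -size_eq0 size_map size_enum_ord -lt0n.
have Hs : forall y, y \in [seq F i | i <- enum 'I_k] -> exists i, y = F i.
  by move=> y /mapP [i _ ->]; exists i.
case: [seq F i | i <- enum 'I_k] Hs => [|a t] //= Hs _.
by apply: Hs; exact: foldmax_in.
Qed.

Lemma fmin_le k (F : 'I_k -> R) i : fmin F <= F i.
Proof.
rewrite /fmin.
have : F i \in [seq F i | i <- enum 'I_k] by apply: map_f; rewrite mem_enum.
case: [seq F i | i <- enum 'I_k] => [|a t] //= H.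
exact: foldmin_le.
Qed.

Lemma fmin_ex k (F : 'I_k -> R) : (0 < k)%N -> exists i, fmin F = F i.
Proof.
move=> hk; rewrite /fmin.
have : [seq F i | i <- enum 'I_k] != [::].
  by rewrite -size_eq0 size_map size_enum_ord -lt0n.
have Hs : forall y, y \in [seq F i | i <- enum 'I_k] -> exists i, y = F i.
  by move=> y /mapP [i _ ->]; exists i.
case: [seq F i | i <- enum 'I_k] Hs => [|a t] //= Hs _.
by apply: Hs; exact: foldmin_in.
Qed.

Lemma fmax_le k (F : 'I_k -> R) c : (0 < k)%N -> (forall i, F i <= c) -> fmax F <= c.
Proof. by move=> hk H; have [i ->] := @fmax_ex k F hk. Qed.

End Aux.

Theorem corollary2 (R : realFieldType) (n m : nat) (hn : (0 < n)%N) (hm : (0 < m)%N)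
    (r : 'M[R]_(n, m)) (w : 'I_m -> R) :
  let p := fun j : 'I_n => fmax (fun i : 'I_m => r j i + w i) in
  let q := fun j : 'I_n => fmin (fun i : 'I_m => r j i - w i) in
  let Delta := (fmax (fun j : 'I_n => p j - q j)) / 2 in
  let f := fun x : 'cV[R]_n => fmax (fun i : 'I_m => cheb (col i r) x + w i) in
  [/\ (forall x : 'cV[R]_n, Delta <= f x),
      (exists x : 'cV[R]_n, f x = Delta) &
      (forall x : 'cV[R]_n,
         (forall j : 'I_n, p j - Delta <= x j 0 <= q j + Delta) -> f x = Delta)].
Proof.
move=> p q Delta f.
have fge : forall (x : 'cV[R]_n) i j, `|r j i - x j 0| + w i <= f x.
  move=> x i j.
  have H1 : cheb (col i r) x + w i <= f x :=
    @fmax_ge R m (fun i0 : 'I_m => cheb (col i0 r) x + w i0) i.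
  have H2 : `|r j i - x j 0| <= cheb (col i r) x.
    by have := @fmax_ge R n (fun j : 'I_n => `|col i r j 0 - x j 0|) j; rewrite mxE.
  lra.
have lower : forall x, Delta <= f x.
  move=> x; have [j0 Hj0] := @fmax_ex R n (fun j : 'I_n => p j - q j) hn.
  have [i1 H1] := @fmax_ex R m (fun i : 'I_m => r j0 i + w i) hm.
  have [i2 H2] := @fmin_ex R m (fun i : 'I_m => r j0 i - w i) hm.
  have A := fge x i1 j0; have B := fge x i2 j0.
  have A' := ler_norm (r j0 i1 - x j0 0).
  have B' := ler_norm (x j0 0 - r j0 i2); rewrite distrC in B'.
  rewrite /Delta Hj0 /p /q H1 H2 /=; lra.
have upper : forall x : 'cV[R]_n,
    (forall j : 'I_n, p j - Delta <= x j 0 <= q j + Delta) -> f x = Delta.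
  move=> x Hx; apply/eqP; rewrite eq_le lower andbT.
  apply: fmax_le => // i; rewrite -lerBrDr; apply: fmax_le => // j.
  rewrite !mxE ler_norml; have /andP [h1 h2] := Hx j.
  have P := @fmax_ge R _ (fun i : 'I_m => r j i + w i) i.
  have Q := @fmin_le R _ (fun i : 'I_m => r j i - w i) i.
  rewrite /p /q /= in h1 h2 P Q.
  apply/andP; split; lra.
split => //.
exists (\col_j ((p j + q j) / 2)); apply: upper => j; rewrite mxE.
have := @fmax_ge R _ (fun j : 'I_n => p j - q j) j; rewrite -/Delta /= => H.
apply/andP; split; rewrite /Delta in H *; lra.
Qed.
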